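(* Let $\mathbf b=b_0b_1b_2\cdots\in\{1,-1\}^{\mathbb N}$. Let $t\ge1$, $0\le u\le t$ and $0\le p\le 2^{t-u}-1$ be integers. Then (1) for each $k\ge0$ such that $k\le u-2$ or $k\ge t-1$, we have $\mathcal E_{k,b_k}(\ell_{t-1}+2^u p,\,2^u,\,2^{t-u})=\mathbf 0$; (2) moreover, $\mathcal E_{k,b}(\ell_{t-1}+2^u p,\,2^u,\,2^{t-u})=\mathbf 0$ for both $b\in\{-1,1\}$ and each $k\ge0$ such that $k\le u-2$ or $k\ge t+3$.
   Context: For integers $a$ and $N\ge1$, $(a \bmod N)$ denotes the unique integer in $\{0,\dots,N-1\}$ congruent to $a$ modulo $N$; we write $a\succ c \pmod N$ iff $(a\bmod N)>(c\bmod N)$. For $b\in\{-1,1\}$, $k\ge0$ and integers $0\le\ell\le n$, let $\varepsilon_{k,b}(\ell,n)=1$ if $n-\ell \succ (2+b)\cdot 2^k-(\ell+1) \pmod{2^{k+2}}$ and $\varepsilon_{k,b}(\ell,n)=0$ otherwise. For $s\ge0$, $d,m\ge1$, $\mathcal E_{k,b}(s,d,m)=\big(\varepsilon_{k,b}(s+jd,s+(j+1)d)\big)_{j=0}^{m-1}$, and $\mathbf 0$ is the zero vector. For $x_0,x_1,x_2,x_3\in\{1,-1\}$, $\ell(x_0,x_1,x_2,x_3)$ is given by the table (listing $(x_0,x_1,x_2,x_3)\mapsto \ell$): $(1,1,1,1)\mapsto7$, $(-1,1,1,1)\mapsto1$, $(1,-1,1,1)\mapsto3$, $(-1,-1,1,1)\mapsto5$,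 $(1,1,-1,1)\mapsto7$, $(-1,1,-1,1)\mapsto9$, $(1,-1,-1,1)\mapsto11$, $(-1,-1,-1,1)\mapsto5$, $(1,1,1,-1)\mapsto23$, $(-1,1,1,-1)\mapsto1$, $(1,-1,1,-1)\mapsto3$, $(-1,-1,1,-1)\mapsto21$, $(1,1,-1,-1)\mapsto23$, $(-1,1,-1,-1)\mapsto9$, $(1,-1,-1,-1)\mapsto11$, $(-1,-1,-1,-1)\mapsto21$. For $t\ge0$, $\ell_t:=2^t\,\ell(b_t,b_{t+1},b_{t+2},b_{t+3})$. *)

(* Defs.v *)
From Stdlib Require Import ZArith List.
Open Scope Z_scope.

Definition succ_mod (a c N : Z) : bool := Z.ltb (c mod N) (a mod N).

Definition eps (k : nat) (b l n : Z) : Z :=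
  if succ_mod (n - l) ((2 + b) * 2 ^ Z.of_nat k - (l + 1)) (2 ^ (Z.of_nat k + 2))
  then 1 else 0.

Definition calE (k : nat) (b s d : Z) (m : nat) : list Z :=
  map (fun j : nat => eps k b (s + Z.of_nat j * d) (s + (Z.of_nat j + 1) * d))
      (seq 0 m).

Definition zerovec (m : nat) : list Z := repeat 0 m.

Definition ell4 (x0 x1 x2 x3 : Z) : Z :=
  match Z.eqb x0 1, Z.eqb x1 1, Z.eqb x2 1, Z.eqb x3 1 with
  | true,  true,  true,  true  => 7
  | false, true,  true,  true  => 1
  | true,  false, true,  true  => 3
  | false, false, true,  true  => 5
  | true,  true,  false, true  => 7
  | false, true,  false, true  => 9
  | true,  false, false, true  => 11
  | false, false, false, true  => 5
  | true,  true,  true,  false => 23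
  | false, true,  true,  false => 1
  | true,  false, true,  false => 3
  | false, false, true,  false => 21
  | true,  true,  false, false => 23
  | false, true,  false, false => 9
  | true,  false, false, false => 11
  | false, false, false, false => 21
  end.

Definition ell_t (bs : nat -> Z) (t : nat) : Z :=
  2 ^ Z.of_nat t * ell4 (bs t) (bs (t + 1)%nat) (bs (t + 2)%nat) (bs (t + 3)%nat).

(* Main.v *)
Require Import Defs.
From Stdlib Require Import ZArith List Lia.
Open Scope Z_scope.

Definition Wc (M L P : Z) : Prop := (M - L) mod P = 0 \/ 4 <= (M - L) mod P.

Lemma caseB (P T x d M L : Z) : 4 <= P -> 1 <= T -> 0 <= x -> 1 <= d ->
  x + 2*d <= 4*T -> Wc M L P -> d <= (M*T - (L*T + x + 1)) mod (P*T).
Proof.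
  intros HP HT Hx Hd Hxd HW. unfold Wc in HW.
  set (w := (M - L) mod P) in *.
  assert (Hw : 0 <= w < P) by (apply Z.mod_pos_bound; lia).
  assert (E : M - L = P * ((M - L) / P) + w) by (apply Z.div_mod; lia).
  set (a := (M - L) / P) in *.
  assert (Eq : M*T - (L*T + x + 1) = (w*T - x - 1) + a*(P*T)).
  { transitivity ((M - L)*T - x - 1); [ring|]. rewrite E; ring. }
  rewrite Eq, Z.mod_add by nia.
  destruct HW as [H0|H4].
  - rewrite H0. replace (0*T - x - 1) with ((P*T - x - 1) + (-1)*(P*T)) by ring.
    rewrite Z.mod_add by nia. rewrite Z.mod_small by nia. nia.
  - assert (w*T >= 4*T) by nia. assert (w*T <= (P-1)*T) by nia.
    rewrite Z.mod_small by nia. nia.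
Qed.

Lemma ell4_set x0 x1 x2 x3 : let L := ell4 x0 x1 x2 x3 in
  L = 1 \/ L = 3 \/ L = 5 \/ L = 7 \/ L = 9 \/ L = 11 \/ L = 21 \/ L = 23.
Proof.
  unfold ell4; destruct (x0 =? 1), (x1 =? 1), (x2 =? 1), (x3 =? 1); cbn; tauto.
Qed.

Lemma table x0 x1 x2 x3 :
  (x0 = 1 \/ x0 = -1) -> (x1 = 1 \/ x1 = -1) -> (x2 = 1 \/ x2 = -1) -> (x3 = 1 \/ x3 = -1) ->
  let L := ell4 x0 x1 x2 x3 in
  Wc ((2+x0)*2^0) L (2^(0+2)) /\ Wc ((2+x1)*2^1) L (2^(1+2)) /\
  Wc ((2+x2)*2^2) L (2^(2+2)) /\ Wc ((2+x3)*2^3) L (2^(3+2)).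
Proof.
  intros [->| ->] [->| ->] [->| ->] [->| ->]; unfold Wc; cbn; lia.
Qed.

Lemma W4 (i b L : Z) : 4 <= i -> (b = 1 \/ b = -1) ->
  (L = 1 \/ L = 3 \/ L = 5 \/ L = 7 \/ L = 9 \/ L = 11 \/ L = 21 \/ L = 23) ->
  Wc ((2+b)*2^i) L (2^(i+2)).
Proof.
  intros Hi Hb HL. unfold Wc.
  rewrite Z.pow_add_r by lia.
  assert (Hq : 2^i = 16 \/ 32 <= 2^i).
  { destruct (Z.eq_dec i 4) as [->|Hne]; [left; reflexivity|right].
    replace i with (5 + (i - 5)) by lia. rewrite Z.pow_add_r by lia.
    assert (0 < 2^(i-5)) by (apply Z.pow_pos_nonneg; lia). nia. }
  destruct Hq as [Hq|Hq].
  - rewrite Hq. destruct Hb as [->| ->];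
    destruct HL as [->|[->|[->|[->|[->|[->|[->| ->]]]]]]]; cbn; lia.
  - right. rewrite Z.mod_small; destruct Hb as [->| ->]; lia.
Qed.

Lemma map_zero {A} (f : A -> Z) (l : list A) :
  (forall x, In x l -> f x = 0) -> map f l = repeat 0 (length l).
Proof.
  induction l as [|a l IH]; intros H; cbn; [reflexivity|].
  rewrite H by (left; reflexivity). f_equal. apply IH. intros; apply H; right; auto.
Qed.

Lemma calE_zero k b s d m :
  (forall j : nat, (j < m)%nat ->
     d mod 2^(Z.of_nat k + 2) <=
     ((2+b)*2^Z.of_nat k - (s + Z.of_nat j * d + 1)) mod 2^(Z.of_nat k + 2)) ->
  calE k b s d m = zerovec m.
Proof.
  intros H. unfold calE, zerovec.
  rewrite map_zero with (l := seq 0 m).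
  - rewrite length_seq; reflexivity.
  - intros j Hj. apply in_seq in Hj. unfold eps, succ_mod.
    replace (s + (Z.of_nat j + 1) * d - (s + Z.of_nat j * d)) with d by ring.
    specialize (H j ltac:(lia)).
    destruct (_ <? _) eqn:E; [apply Z.ltb_lt in E; lia | reflexivity].
Qed.

Lemma mainB (tz uz kz b L p jz : Z) : 1 <= tz -> 0 <= uz <= tz -> tz <= kz + 1 ->
  0 <= p <= 2^(tz-uz) - 1 -> 0 <= jz <= 2^(tz-uz) - 1 ->
  Wc ((2+b)*2^(kz-tz+1)) L (2^(kz-tz+1+2)) ->
  2^uz mod 2^(kz+2) <=
  ((2+b)*2^kz - (2^(tz-1)*L + 2^uz*p + jz*2^uz + 1)) mod 2^(kz+2).
Proof.
  intros Ht Hu Hk Hp Hj HW.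
  assert (ER : 2^uz * 2^(tz-uz) = 2 * 2^(tz-1)).
  { rewrite <- Z.pow_add_r by lia. replace (uz + (tz-uz)) with (1 + (tz-1)) by lia.
    rewrite Z.pow_add_r by lia. reflexivity. }
  assert (EN : 2^(kz+2) = 2^(kz-tz+1+2) * 2^(tz-1)).
  { rewrite <- Z.pow_add_r by lia. f_equal. lia. }
  assert (EK : 2^kz = 2^(kz-tz+1) * 2^(tz-1)).
  { rewrite <- Z.pow_add_r by lia. f_equal. lia. }
  assert (HP4 : 4 <= 2^(kz-tz+1+2)).
  { replace (kz-tz+1+2) with (2 + (kz-tz+1)) by lia. rewrite Z.pow_add_r by lia.
    assert (0 < 2^(kz-tz+1)) by (apply Z.pow_pos_nonneg; lia). change (2^2) with 4. lia. }
  assert (HT : 1 <= 2^(tz-1)) by (assert (0 < 2^(tz-1)) by (apply Z.pow_pos_nonneg; lia); lia).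
  assert (HD : 1 <= 2^uz) by (assert (0 < 2^uz) by (apply Z.pow_pos_nonneg; lia); lia).
  assert (HR : 1 <= 2^(tz-uz)) by (assert (0 < 2^(tz-uz)) by (apply Z.pow_pos_nonneg; lia); lia).
  set (T := 2^(tz-1)) in *. set (D := 2^uz) in *. set (R := 2^(tz-uz)) in *.
  set (P := 2^(kz-tz+1+2)) in *. set (Q := 2^(kz-tz+1)) in *.
  rewrite EN, EK.
  assert (D <= 2*T) by nia. assert (4*T <= P*T) by nia.
  rewrite (Z.mod_small D) by nia.
  replace ((2 + b) * (Q * T) - (T * L + D * p + jz * D + 1))
    with (((2+b)*Q)*T - (L*T + (D*p + jz*D) + 1)) by ring.
  apply caseB; try lia; try nia.
  exact HW.
Qed.

Lemma caseA (kz uz c : Z) : 0 <= kz -> kz + 2 <= uz ->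
  2^uz mod 2^(kz+2) <= c mod 2^(kz+2).
Proof.
  intros Hk Hu. replace uz with ((uz - (kz+2)) + (kz+2)) by lia.
  rewrite Z.pow_add_r, Z.mod_mul by (try lia; apply Z.pow_nonzero; lia).
  apply Z.mod_pos_bound. apply Z.pow_pos_nonneg; lia.
Qed.

Theorem lemma5p2 (bs : nat -> Z) (hb : forall i : nat, bs i = 1 \/ bs i = -1)
  (t u : nat) (p : Z) (ht : (1 <= t)%nat) (hu : (u <= t)%nat)
  (hp0 : 0 <= p) (hp1 : p <= 2 ^ Z.of_nat (t - u) - 1) :
  (forall k : nat, ((k + 2 <= u)%nat \/ (t <= k + 1)%nat) ->
     calE k (bs k) (ell_t bs (t - 1) + 2 ^ Z.of_nat u * p) (2 ^ Z.of_nat u)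
          (2 ^ (t - u))%nat = zerovec (2 ^ (t - u))%nat) /\
  (forall (b : Z) (k : nat), (b = 1 \/ b = -1) ->
     ((k + 2 <= u)%nat \/ (t + 3 <= k)%nat) ->
     calE k b (ell_t bs (t - 1) + 2 ^ Z.of_nat u * p) (2 ^ Z.of_nat u)
          (2 ^ (t - u))%nat = zerovec (2 ^ (t - u))%nat).
Proof.
  rewrite Nat2Z.inj_sub in hp1 by lia.
  unfold ell_t. rewrite (Nat2Z.inj_sub t 1) by lia.
  replace (t - 1 + 1)%nat with t by lia.
  replace (t - 1 + 2)%nat with (t + 1)%nat by lia.
  replace (t - 1 + 3)%nat with (t + 2)%nat by lia.
  pose proof (ell4_set (bs (t-1)%nat) (bs t) (bs (t+1)%nat) (bs (t+2)%nat)) as HL. cbv zeta in HL.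
  pose proof (table (bs (t-1)%nat) (bs t) (bs (t+1)%nat) (bs (t+2)%nat) (hb _) (hb _) (hb _) (hb _))
    as Htab. cbv zeta in Htab.
  set (L := ell4 (bs (t-1)%nat) (bs t) (bs (t+1)%nat) (bs (t+2)%nat)) in *.
  assert (Hj : forall j : nat, (j < 2 ^ (t - u))%nat ->
            0 <= Z.of_nat j <= 2 ^ (Z.of_nat t - Z.of_nat u) - 1).
  { intros j Hj. apply Nat2Z.inj_lt in Hj. rewrite Nat2Z.inj_pow in Hj.
    rewrite Nat2Z.inj_sub in Hj by lia. change (Z.of_nat 2) with 2 in Hj. lia. }
  destruct Htab as [H0 [H1 [H2 H3]]].
  split.
  - intros k Hk. apply calE_zero. intros j Hjm. specialize (Hj j Hjm).
    destruct Hk as [Hk|Hk].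
    + apply caseA; lia.
    + apply mainB; try lia.
      assert (Hc : k = (t-1)%nat \/ k = t \/ k = (t+1)%nat \/ k = (t+2)%nat \/ (t+3 <= k)%nat)
        by lia.
      destruct Hc as [->|[->|[->|[->|Hc]]]].
      * replace (Z.of_nat (t-1) - Z.of_nat t + 1) with 0 by lia. exact H0.
      * replace (Z.of_nat t - Z.of_nat t + 1) with 1 by lia. exact H1.
      * replace (Z.of_nat (t+1) - Z.of_nat t + 1) with 2 by lia. exact H2.
      * replace (Z.of_nat (t+2) - Z.of_nat t + 1) with 3 by lia. exact H3.
      * apply W4; [lia | apply hb | exact HL].
  - intros b k Hb Hk. apply calE_zero. intros j Hjm. specialize (Hj j Hjm).
    destruct Hk as [Hk|Hk].
    + apply caseA; lia.
    + apply mainB; try lia. apply W4; [lia | exact Hb | exact HL].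
Qed.
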